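(* For every integer $n\geq 1$, $$c_n(231,1243 : 231)=c_n(312,2134 : 312)=\begin{cases}\frac{4k^3+3k^2-k}{6}+1 & \text{if } n=2k,\\ \frac{4k^3+9k^2+5k}{6}+1 & \text{if } n=2k+1.\end{cases}$$
   Context: $S_n$ is the symmetric group on $[n]=\{1,\dots,n\}$, and a permutation $\pi\in S_n$ is written in one-line notation $\pi=\pi_1\pi_2\cdots\pi_n$ with $\pi_i=\pi(i)$. For $\tau\in S_k$, $k\le n$, $\pi$ contains $\tau$ if there are indices $i_1<\dots<i_k$ with $\pi_{i_s}>\pi_{i_t}$ iff $\tau_s>\tau_t$ for all $1\le s<t\le k$; otherwise $\pi$ avoids $\tau$. $\pi^2$ denotes the composition $\pi\circ\pi$. For patterns $\sigma_1,\sigma_2,\rho$, $c_n(\sigma_1,\sigma_2 : \rho)$ denotes the number of permutations $\pi\in S_n$ such that $\pi$ avoids both $\sigma_1$ and $\sigma_2$ and $\pi^2$ avoids $\rho$. *)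

(* Defs.v *)
From mathcomp Require Import all_boot all_order all_algebra all_fingroup.
Set Implicit Arguments. Unset Strict Implicit. Unset Printing Implicit Defensive.

Definition oneline (n : nat) (pi : {perm 'I_n}) : seq nat :=
  [seq (val (pi i)).+1 | i <- enum 'I_n].

(* A pattern tau in S_k is given by its one-line notation (a seq nat).
   pi contains tau iff some subsequence (chosen by a mask, i.e. indices
   i_1 < ... < i_k) of the one-line notation of pi has size k and satisfies
   pi_{i_s} > pi_{i_t} <-> tau_s > tau_t for all s < t. *)
Definition contains (n : nat) (pi : {perm 'I_n}) (tau : seq nat) : bool :=
  [exists m : n.-tuple bool,
     let s := mask m (oneline pi) in
     (size s == size tau) &&
     [forall a : 'I_(size tau), forall b : 'I_(size tau),
        (a < b) ==> ((nth 0 s a > nth 0 s b) == (nth 0 tau a > nth 0 tau b))]].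

Definition avoids (n : nat) (pi : {perm 'I_n}) (tau : seq nat) : bool :=
  ~~ contains pi tau.

Definition cn (n : nat) (sigma1 sigma2 rho : seq nat) : nat :=
  #|[set pi : {perm 'I_n} | [&& avoids pi sigma1, avoids pi sigma2
                              & avoids (pi * pi)%g rho]]|.

(* Main.v *)
Require Import Defs.
From mathcomp Require Import all_boot all_order all_algebra all_fingroup.
From mathcomp Require Import zify lra.
Set Implicit Arguments. Unset Strict Implicit. Unset Printing Implicit Defensive.
Ltac slia := first [lia | exfalso; lia].


Definition PB (p : nat -> nat) n := forall i, i < n -> p i < n.
Definition PI (p : nat -> nat) n := forall i j, i < n -> j < n -> p i = p j -> i = j.
Definition PS (p : nat -> nat) n := forall v, v < n -> exists2 i, i < n & p i = v.
Definition A231 (p : nat -> nat) n :=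
  forall i j k, i < j -> j < k -> k < n -> p k < p i -> p i < p j -> False.
Definition A1243 (p : nat -> nat) n :=
  forall i j k l, i < j -> j < k -> k < l -> l < n ->
    p i < p j -> p j < p l -> p l < p k -> False.

Lemma PH n N (f : nat -> nat) :
  (forall i, i < n -> f i < N) -> (forall i j, i < n -> j < n -> f i = f j -> i = j) ->
  n <= N.
Proof.
move=> Hb Hi.
pose g (i : 'I_n) : 'I_N := Ordinal (Hb i (ltn_ord i)).
have ig : injective g.
  move=> x y /(congr1 val) /= /Hi => H; apply: val_inj; exact: H.
by have := leq_card g ig; rewrite !card_ord.
Qed.

Lemma MS p n t : PB p n -> PI p n -> A231 p n -> t < n -> p t = n.-1 ->
  (forall i, i < t -> p i < t) /\ (forall k, t <= k -> k < n -> t <= p k).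
Proof.
move=> Hb Hi H231 tn pt.
have key : forall i k, i < t -> t <= k -> k < n -> p i < p k.
  move=> i k it tk kn.
  have pin := Hb i (ltn_trans it tn).
  have pit : p i != p t by apply/eqP => /Hi h; have := h (ltn_trans it tn) tn; slia.
  have pkn := Hb k kn.
  case: (ltngtP (p i) (p k)) => // h.
  - case: (ltngtP t k) => tk'.
    + exfalso; apply: (H231 i t k) => //; slia.
    + slia.
    + subst k; slia.
  - have := Hi i k (ltn_trans it tn) kn h; slia.
split.
- move=> i it.
  suff h : n - t <= n.-1 - p i by slia.
  apply: (@PH (n - t) (n.-1 - p i) (fun k => p (t + k) - p i - 1)).
  + move=> k kn; have := key i (t + k) it (leq_addr _ _) ltac:(lia).
    have := Hb (t + k) ltac:(lia); slia.
  + move=> k1 k2 k1n k2n.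
    have := key i (t + k1) it (leq_addr _ _) ltac:(lia).
    have := key i (t + k2) it (leq_addr _ _) ltac:(lia).
    move=> h1 h2 e.
    have e' : p (t + k1) = p (t + k2) by slia.
    have := Hi (t + k1) (t + k2) ltac:(lia) ltac:(lia) e'; slia.
- move=> k tk kn.
  apply: (@PH t (p k) p).
  + move=> i it; exact: key.
  + move=> i j it jt; apply: Hi; slia.
Qed.

Lemma lemH p m : 2 <= m -> PB p m -> PI p m -> PS p m -> A231 p m ->
  A231 (fun i => p (p i)) m -> p 0 = m.-1 ->
  exists j, [/\ 0 < j, 2 * j <= m &
     forall i, i < m -> p i = (if i < m - j then m.-1 - i else i - (m - j))].
Proof.
move=> m2 Hb Hi Hs H231 Q231 p0.
have [r rm pr] := Hs 0 ltac:(lia).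
have r0 : 0 < r.
  case: r rm pr => // _ h; rewrite h in p0; slia.
have pinz : forall i, i < m -> i != r -> 0 < p i.
  move=> i im ir; case: (posnP (p i)) => // h.
  have := Hi i r im rm ltac:(lia); slia.
have Dec : forall i i', i < i' -> i' < r -> p i' < p i.
  move=> i i' ii' i'r.
  case: (ltngtP (p i') (p i)) => // h.
  - exfalso; apply: (H231 i i' r) => //; try slia.
    rewrite pr; apply: (pinz); slia.
  - have := Hi i' i ltac:(lia) ltac:(lia) h; slia.
have qb : PB (fun i => p (p i)) m by move=> i im; apply: (Hb); apply: (Hb).
have qi : PI (fun i => p (p i)) m.
  move=> i j im jm /= e; apply: (Hi i j im jm); exact: (Hi _ _ (Hb i im) (Hb j jm) e).
have qr : p (p r) = m.-1 by rewrite pr p0.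
have [Q1 Q2] := MS qb qi Q231 rm qr.
have pm1 : p m.-1 < r by have := Q1 0 r0; rewrite p0.
have E : forall x, r <= x -> x < m -> p x < r.
  move=> x rx xm; rewrite ltnNge; apply/negP => px.
  have xr : x != r by apply/eqP => h; subst x; rewrite pr in px; slia.
  have xm1 : x != m.-1 by apply/eqP => h; subst x; slia.
  have pxr : p x != r.
    apply/eqP => h; have := Q2 x rx xm; rewrite h pr; slia.
  have [y0 y0m py0] := Hs r rm.
  have y0r : y0 < r.
    rewrite ltnNge; apply/negP => h; have := Q2 y0 h y0m; rewrite py0 pr; slia.
  apply: (H231 y0 x m.-1); slia.
have C : forall i x, i < r -> r <= x -> x < m -> p x < p i.
  move=> i x ir rx xm.
  case: (ltngtP (p x) (p i)) => // h.
  - have wr := E x rx xm.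
    have := Dec (p i) (p x) h wr.
    have := Q2 x rx xm. have := Q1 i ir. slia.
  - have := Hi x i xm ltac:(lia) h; slia.
have Ub : forall i, i < r -> p i <= m.-1 - i.
  elim=> [|i IH] ir; first by rewrite p0 subn0.
  have := IH ltac:(lia); have := Dec i i.+1 (ltnSn i) ir; slia.
have Lr : m - r <= p r.-1.
  apply: (@PH (m - r) (p r.-1) (fun k => p (r + k))).
  - move=> k km; apply: (C); slia.
  - move=> k1 k2 k1m k2m /Hi h; have := h ltac:(lia) ltac:(lia); slia.
have Lb : forall d, d < r -> p r.-1 + d <= p (r.-1 - d).
  elim=> [|d IH] dr; first by rewrite subn0 addn0.
  have := IH ltac:(lia).
  have := Dec (r.-1 - d.+1) (r.-1 - d) ltac:(lia) ltac:(lia); slia.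
have Pre : forall i, i < r -> p i = m.-1 - i.
  move=> i ir; have := Ub i ir; have := Lb (r.-1 - i) ltac:(lia).
  have -> : r.-1 - (r.-1 - i) = i by slia.
  slia.
have jr : m - r <= r.
  rewrite leqNgt; apply/negP => h.
  have [y ym py] := Hs r rm.
  case: (ltnP y r) => yr.
  - have := Pre y yr; slia.
  - have := Q2 y yr ym; rewrite py pr; slia.
have Inc : forall x y, r <= x -> x < y -> y < m -> p x < p y.
  move=> x y rx xy ym.
  case: (ltngtP (p x) (p y)) => // h.
  - have xr : r < x.
      rewrite ltn_neqAle rx andbT; apply/eqP => e; subst x; rewrite pr in h; slia.
    have e1 := Pre (m.-1 - y) ltac:(lia).
    have e2 := Pre (m.-1 - x) ltac:(lia).
    have e3 := Pre (m.-1 - r) ltac:(lia).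
    have f1 : m.-1 - (m.-1 - y) = y by slia.
    have f2 : m.-1 - (m.-1 - x) = x by slia.
    have f3 : m.-1 - (m.-1 - r) = r by slia.
    rewrite f1 in e1; rewrite f2 in e2; rewrite f3 in e3.
    have py0 := pinz y ym ltac:(lia).
    exfalso; apply: (Q231 (m.-1 - y) (m.-1 - x) (m.-1 - r)); try slia.
    + by rewrite e3 e1 pr.
    + by rewrite e1 e2.
  - have := Hi x y ltac:(lia) ym h; slia.
have Slo : forall t, r + t < m -> t <= p (r + t).
  elim=> [|t IH] rtm; first by rewrite addn0 pr.
  have := IH ltac:(lia); have := Inc (r + t) (r + t.+1) ltac:(lia) ltac:(lia) rtm; slia.
have Shi : forall d, d < m - r -> p (m.-1 - d) + d < m - r.
  elim=> [|d IH] dm.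
  - rewrite subn0 addn0; have := C r.-1 m.-1 ltac:(lia) ltac:(lia) ltac:(lia).
    rewrite (Pre r.-1); slia.
  - have := IH ltac:(lia); have := Inc (m.-1 - d.+1) (m.-1 - d) ltac:(lia) ltac:(lia) ltac:(lia); slia.
exists (m - r); split; try slia.
move=> i im; have -> : m - (m - r) = r by slia.
case: ifP => ir; first exact: Pre.
have := Slo (i - r) ltac:(lia); have := Shi (m.-1 - i) ltac:(lia).
have -> : r + (i - r) = i by slia.
have -> : m.-1 - (m.-1 - i) = i by slia.
slia.
Qed.

Definition dec (a b j i : nat) : nat :=
  if i < a then a.-1 - i
  else if i < a + b - j then (a + a + b).-1 - i
  else if i < a + b then i + j - b
  else i.

Definition valid n (a b j : nat) : bool :=
  [&& a == 0, b == 0 & j == 0] || [&& 2 <= b, 0 < j, 2 * j <= b & a + b <= n].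

Lemma dec_id a b j i : a + b <= i -> dec a b j i = i.
Proof. by rewrite /dec => h; do 3 (case: ifP => ?; first slia). Qed.

Lemma structure n p : PB p n -> PI p n -> PS p n -> A231 p n -> A1243 p n ->
  A231 (fun i => p (p i)) n ->
  exists a b j, valid n a b j /\ forall i, i < n -> p i = dec a b j i.
Proof.
elim: n p => [|n IH] p Hb Hi Hs H231 H1243 Q231.
  by exists 0, 0, 0; split.
case: (eqVneq (p n) n) => pn.
- have Hb' : PB p n.
    move=> i ik; have := Hb i ltac:(lia).
    have : p i != p n by apply/eqP => /Hi h; have := h ltac:(lia) ltac:(lia); slia.
    rewrite pn; slia.
  have Hi' : PI p n by move=> i j ik jk; apply: Hi; slia.
  have Hs' : PS p n.
    move=> v vn; have [i ik piv] := Hs v ltac:(lia).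
    exists i => //; case: (ltnP i n) => // h.
    have ein : i = n by slia.
    subst i; rewrite pn in piv; slia.
  have [a [b [j [va Hf]]]] := IH p Hb' Hi' Hs'
    (fun i j k h1 h2 h3 => H231 i j k h1 h2 ltac:(lia))
    (fun i j k l h1 h2 h3 h4 => H1243 i j k l h1 h2 h3 ltac:(lia))
    (fun i j k h1 h2 h3 => Q231 i j k h1 h2 ltac:(lia)).
  exists a, b, j; split.
    move: va; rewrite /valid => /orP [h|h]; apply/orP; [by left | right].
    by move: h => /and4P [h1 h2 h3 h4]; apply/and4P; split => //; slia.
  move=> i; rewrite ltnS leq_eqVlt => /orP [/eqP -> | ik]; last exact: Hf.
  rewrite pn dec_id //; move: va; rewrite /valid; slia.
- have [t tn pt] := Hs n (ltnSn n).
  have tn' : t < n.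
    case: (ltnP t n) => // h; have e : t = n by slia.
    by subst t; rewrite pt eqxx in pn.
  have [P1 P2] := MS Hb Hi H231 tn pt.
  have Dec : forall i i', i < i' -> i' < t -> p i' < p i.
    move=> i i' ii' i't.
    case: (ltngtP (p i') (p i)) => // h.
    - have := P1 i' i't; have := P2 n ltac:(lia) (ltnSn n); have := Hb n (ltnSn n).
      move=> h1 h2 h3; exfalso; apply: (H1243 i i' t n); try slia.
    - have := Hi i' i ltac:(lia) ltac:(lia) h; slia.
  have Ub : forall i, i < t -> p i <= t.-1 - i.
    elim=> [|i IH'] it; first by have := P1 0 it; slia.
    have := IH' ltac:(lia); have := Dec i i.+1 (ltnSn i) it; slia.
  have Lb : forall d, d < t -> d <= p (t.-1 - d).
    elim=> [|d IH'] dt; first by [].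
    have := IH' ltac:(lia).
    have := Dec (t.-1 - d.+1) (t.-1 - d) ltac:(lia) ltac:(lia); slia.
  have Pre : forall i, i < t -> p i = t.-1 - i.
    move=> i it; have := Ub i it; have := Lb (t.-1 - i) ltac:(lia).
    have -> : t.-1 - (t.-1 - i) = i by slia.
    slia.
  have [m mdef] : {m | m = n.+1 - t} by exists (n.+1 - t).
  pose p' := fun i => p (t + i) - t.
  have Sge : forall i, i < m -> t <= p (t + i) by move=> i im; apply: P2; slia.
  have Hb' : PB p' m by move=> i im; have := Hb (t + i) ltac:(lia); rewrite /p'; slia.
  have Hi' : PI p' m.
    move=> i1 i2 i1m i2m; rewrite /p' => e.
    have := Sge i1 i1m; have := Sge i2 i2m => h1 h2.
    have e' : p (t + i1) = p (t + i2) by slia.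
    have := Hi (t + i1) (t + i2) ltac:(lia) ltac:(lia) e'; slia.
  have Hs' : PS p' m.
    move=> v vm; have [y yn py] := Hs (t + v) ltac:(lia).
    have ty : t <= y by rewrite leqNgt; apply/negP => /P1; rewrite py; slia.
    exists (y - t); first by  slia.
    by rewrite /p' subnKC // py; slia.
  have H231' : A231 p' m.
    move=> i j k ij jk km; rewrite /p'.
    have := Sge i ltac:(lia); have := Sge j ltac:(lia); have := Sge k ltac:(lia).
    move=> h1 h2 h3 h4 h5; apply: (H231 (t + i) (t + j) (t + k)); slia.
  have Q231' : A231 (fun i => p' (p' i)) m.
    have eq : forall i, i < m -> p' (p' i) = p (p (t + i)) - t.
      move=> i im; rewrite /p' subnKC //; exact: (Sge i im).
    have Sge2 : forall i, i < m -> t <= p (p (t + i)).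
      move=> i im; apply: P2; [exact: (Sge i im) | apply: (Hb); slia].
    move=> i j k ij jk km; rewrite !eq; try slia.
    have := Sge2 i ltac:(lia); have := Sge2 j ltac:(lia); have := Sge2 k ltac:(lia).
    move=> h1 h2 h3 h4 h5; apply: (Q231 (t + i) (t + j) (t + k)); slia.
  have p'0 : p' 0 = m.-1 by rewrite /p' addn0 pt; slia.
  have [j [j0 jm Hj]] := lemH (m := m) ltac:( lia) Hb' Hi' Hs' H231' Q231' p'0.
  exists t, m, j; split; first by rewrite /valid; apply/orP; right; slia.
  move=> i ik; rewrite /dec.
  case: ifP => it; first exact: Pre.
  have ti : t <= i by slia.
  have := Hj (i - t) ltac:( lia); rewrite /p' subnKC //.
  have := Sge (i - t) ltac:( lia); rewrite subnKC //.
  move=> h1; case: ifP => h5 h2; repeat case: ifP => ?; slia.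
Qed.

Variant dec_spec (a b j i : nat) : nat -> Type :=
 | DS1 of i < a : dec_spec a b j i (a.-1 - i)
 | DS2 of a <= i & i < a + b - j : dec_spec a b j i ((a + a + b).-1 - i)
 | DS3 of a + b - j <= i & i < a + b : dec_spec a b j i (i + j - b)
 | DS4 of a + b <= i : dec_spec a b j i i.

Lemma decP a b j i : dec_spec a b j i (dec a b j i).
Proof.
rewrite /dec; case: ifP => h1; first by constructor.
case: ifP => h2; first by constructor; slia.
case: ifP => h3; first by constructor; slia.
by constructor; slia.
Qed.

Ltac dsplit := repeat match goal with
  | |- context [dec ?a ?b ?j ?x] =>
      lazymatch x with context [dec] => fail | _ =>
      case: (decP a b j x) => [?|? ?|? ?|?]; try slia end
  end.

Definition qexp a b j i :=
  if i < a then i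
  else if i < a + j then (a + a + j).-1 - i
  else if i < a + b - j then i
  else if i < a + b then (a + a + b + b - j).-1 - i
  else i.

Variant q_spec (a b j i : nat) : nat -> Type :=
 | QS1 of i < a : q_spec a b j i i
 | QS2 of a <= i & i < a + j : q_spec a b j i ((a + a + j).-1 - i)
 | QS3 of a + j <= i & i < a + b - j : q_spec a b j i i
 | QS4 of a + b - j <= i & i < a + b : q_spec a b j i ((a + a + b + b - j).-1 - i)
 | QS5 of a + b <= i : q_spec a b j i i.

Lemma qP a b j i : q_spec a b j i (qexp a b j i).
Proof.
rewrite /qexp; case: ifP => h1; first by constructor.
case: ifP => h2; first by constructor; slia.
case: ifP => h3; first by constructor; slia.
case: ifP => h4; first by constructor; slia.
by constructor; slia.
Qed.

Ltac qsplit := repeat match goal with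
  | |- context [qexp ?a ?b ?j ?x] => case: (qP a b j x) => [?|? ?|? ?|? ?|?]; try slia
  end.

Section Conv.
Variables (n a b j : nat).
Hypothesis (hb : 2 <= b) (hj : 0 < j) (hjb : 2 * j <= b) (hn : a + b <= n).

Lemma dec_PB : PB (dec a b j) n.
Proof. move=> i im; dsplit. Qed.

Lemma dec_PI : PI (dec a b j) n.
Proof. move=> i k im km; dsplit. Qed.

Lemma dec_sq i : dec a b j (dec a b j i) = qexp a b j i.
Proof. dsplit; qsplit. Qed.

Lemma dec_231 : A231 (dec a b j) n.
Proof. move=> i k l ik kl ln; dsplit. Qed.

Lemma dec_1243 : A1243 (dec a b j) n.
Proof. move=> i k l o ik kl lo on; dsplit. Qed.

Lemma dec_q231 : A231 (fun i => dec a b j (dec a b j i)) n.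
Proof. move=> i k l ik kl ln; rewrite !dec_sq; qsplit. Qed.
End Conv.


Lemma dec_inj n a b j a' b' j' : valid n a b j -> valid n a' b' j' ->
  (forall i, i < n -> dec a b j i = dec a' b' j' i) -> (a, b, j) = (a', b', j').
Proof.
rewrite /valid => /orP [/and3P [/eqP -> /eqP -> /eqP ->] | /and4P [h1 h2 h3 h4]];
  move=> /orP [/and3P [/eqP -> /eqP -> /eqP ->] | /and4P [h1' h2' h3' h4']] // H.
- have := H a' ltac:(lia); dsplit.
- have := H a ltac:(lia); dsplit.
- have e1 : a + b = a' + b'.
    case: (ltngtP (a + b) (a' + b')) => // h.
    + have := H (a' + b').-1 ltac:(lia); dsplit.
    + have := H (a + b).-1 ltac:(lia); dsplit.
  have e2 : a = a'.
    case: (ltngtP a a') => // h.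
    + have := H a ltac:(lia); dsplit.
    + have := H a' ltac:(lia); dsplit.
  have e3 : j = j'.
    have := H (a + b).-1 ltac:(lia); dsplit.
  have e4 : b = b' by slia.
  by rewrite e2 e3 e4.
Qed.

Fixpoint Qb (e b : nat) : seq (nat * nat * nat) :=
  if b is b'.+1 then Qb e b' ++ [seq (e - b'.+1, b'.+1, j) | j <- iota 1 (b'.+1 %/ 2)]
  else [::].

Fixpoint L (n : nat) : seq (nat * nat * nat) :=
  if n is n'.+1 then L n' ++ Qb n'.+1 n'.+1 else [:: (0, 0, 0)].

Lemma memQb e b x : (x \in Qb e b) =
  [&& 2 <= x.1.2, x.1.2 <= b, 0 < x.2, 2 * x.2 <= x.1.2 & x.1.1 == e - x.1.2].
Proof.
case: x => [[a c] k] /=.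
elim: b => [|b IH] /=; first by rewrite in_nil; apply/esym/negbTE; apply/negP; slia.
rewrite mem_cat IH; apply/idP/idP.
- case/orP => [/and5P [? ? ? ? ?] | /mapP [k' ]]; first by apply/and5P; split; slia.
  rewrite mem_iota => hk [-> -> ->]; apply/and5P; split; slia.
- move=> /and5P [h1 h2 h3 h4 /eqP h5]; apply/orP.
  case: (ltnP c b.+1) => hc; [left | right].
  + apply/and5P; split; slia.
  + apply/mapP; exists k; first by rewrite mem_iota; slia.
    have ec : c = b.+1 by slia.
    by rewrite h5 ec.
Qed.

Lemma L_S n : L n.+1 = L n ++ Qb n.+1 n.+1.
Proof. by []. Qed.

Lemma memL n x : (x \in L n) = valid n x.1.1 x.1.2 x.2.
Proof.
case: x => [[a c] k] /=.
elim: n => [|n IH].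
  rewrite /= inE /valid; apply/idP/idP.
  - by move/eqP => [-> -> ->].
  - case/orP => [/and3P [/eqP -> /eqP -> /eqP ->] // | /and4P [? ? ? ?]]; slia.
rewrite L_S mem_cat IH memQb /=; rewrite /valid.
apply/idP/idP.
- case/orP => [/orP [-> // | /and4P [? ? ? ?]] | /and5P [? ? ? ? ?]];
    apply/orP; right; apply/and4P; split; slia.
- case/orP => [-> // | /and4P [h1 h2 h3 h4]].
  case: (ltnP (a + c) n.+1) => h.
  + apply/orP; left; apply/orP; right; apply/and4P; split; slia.
  + apply/orP; right; apply/and5P; split; slia.
Qed.

Lemma uniqQb e b : uniq (Qb e b).
Proof.
elim: b => [|b IH] //=.
rewrite cat_uniq IH /=; apply/andP; split.
- apply/hasPn => x /mapP [k _ ->]; rewrite memQb /=; slia.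
- rewrite map_inj_uniq ?iota_uniq //; by move=> x y [].
Qed.

Lemma uniqL n : uniq (L n).
Proof.
elim: n => [|n IH] //.
rewrite L_S cat_uniq IH uniqQb andbT.
apply/hasPn => x; rewrite memQb memL /valid; case: x => [[? ?] ?] /=; slia.
Qed.

Fixpoint hs b := if b is b'.+1 then hs b' + b %/ 2 else 0.
Fixpoint Gs n := if n is n'.+1 then Gs n' + hs n else 1.

Lemma size_Qb e b : size (Qb e b) = hs b.
Proof. by elim: b => [|b IH] //=; rewrite size_cat IH size_map size_iota. Qed.

Lemma size_L n : size (L n) = Gs n.
Proof. by elim: n => [|n IH] //; rewrite L_S size_cat IH size_Qb. Qed.

Lemma hs_closed k : hs (2 * k) = k * k /\ hs (2 * k).+1 = k * k.+1.
Proof.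
elim: k => [|k [IH1 IH2]] //.
have -> : 2 * k.+1 = (2 * k).+2 by slia.
rewrite /= IH1.
have -> : (2 * k).+1 %/ 2 = k by slia.
have -> : (2 * k).+2 %/ 2 = k.+1 by slia.
have -> : (2 * k).+3 %/ 2 = k.+1 by slia.
split; slia.
Qed.

Lemma Gs_closed k : 6 * Gs (2 * k) + k = 4 * k ^ 3 + 3 * k ^ 2 + 6 /\
  6 * Gs (2 * k).+1 = 4 * k ^ 3 + 9 * k ^ 2 + 5 * k + 6.
Proof.
elim: k => [|k [IH1 IH2]] //.
have e : 2 * k.+1 = (2 * k).+2 by slia.
have [h1 h2] := hs_closed k.
have [h3 h4] := hs_closed k.+1.
rewrite e in h3 h4 *.
rewrite /= in IH2 *.
split; nia.
Qed.

Definition pf n (pi : {perm 'I_n}) (k : nat) : nat :=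
  if insub k is Some x then val (pi x) else 0.

Lemma pfE n (pi : {perm 'I_n}) (x : 'I_n) : pf pi x = val (pi x).
Proof. by rewrite /pf valK. Qed.

Lemma pfE' n (pi : {perm 'I_n}) k (h : k < n) : pf pi k = val (pi (Ordinal h)).
Proof. by rewrite -pfE. Qed.

Lemma oneline_pf n (pi : {perm 'I_n}) :
  oneline pi = map (fun k => (pf pi k).+1) (iota 0 n).
Proof. by rewrite /oneline -val_enum_ord -map_comp; apply: eq_map => x /=; rewrite pfE. Qed.

Definition ordc (s tau : seq nat) :=
  [forall a : 'I_(size tau), forall b : 'I_(size tau),
     (a < b) ==> ((nth 0 s a > nth 0 s b) == (nth 0 tau a > nth 0 tau b))].

Lemma containsP n (pi : {perm 'I_n}) tau :
  reflect (exists idx, [/\ subseq idx (iota 0 n), size idx = size tau &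
             ordc (map (fun k => (pf pi k).+1) idx) tau]) (contains pi tau).
Proof.
apply: (iffP existsP).
- case=> m /= /andP [/eqP hs hf].
  rewrite oneline_pf -map_mask in hs hf.
  exists (mask m (iota 0 n)); split => //; first exact: mask_subseq.
  by rewrite size_map in hs.
- case=> idx [hsub hs hf].
  have /subseqP [m sm eidx] := hsub.
  have sm' : size m == n by rewrite sm size_iota.
  exists (Tuple sm') => /=.
  rewrite oneline_pf -map_mask -eidx; apply/andP; split => //.
  by rewrite size_map hs.
Qed.

Lemma sub_iota n a x s : subseq (x :: s) (iota a n) =
  (a <= x < a + n) && subseq s (iota x.+1 (a + n - x.+1)).
Proof.
elim: n a => [|n IH] a /=.
  by rewrite addn0; case: (leqP a x) => //= h; rewrite ltnNge h.
case: eqP => [-> | ne].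
  have -> : a + n.+1 - a.+1 = n by slia.
  have -> : (a <= a < a + n.+1) = true by apply/andP; split; slia.
  by [].
rewrite IH; congr andb.
- apply/idP/idP; slia.
- by rewrite addSnnS.
Qed.

Lemma sub3 n i j k : subseq [:: i; j; k] (iota 0 n) <-> [/\ i < j, j < k & k < n].
Proof.
rewrite !sub_iota sub0seq andbT; split.
- move=> /andP [/andP [h1 h2] /andP [/andP [h3 h4] /andP [h5 h6]]]; split; slia.
- move=> [h1 h2 h3]; apply/andP; split; [apply/andP; split; slia|].
  apply/andP; split; [apply/andP; split; slia|apply/andP; split; slia].
Qed.

Lemma sub4 n i j k l : subseq [:: i; j; k; l] (iota 0 n) <->
  [/\ i < j, j < k, k < l & l < n].
Proof.
rewrite !sub_iota sub0seq andbT; split.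
- move=> /andP [/andP [h1 h2] /andP [/andP [h3 h4] /andP [/andP [h5 h6] /andP [h7 h8]]]];
  split; slia.
- move=> [h1 h2 h3 h4]; apply/andP; split; [apply/andP; split; slia|].
  apply/andP; split; [apply/andP; split; slia|].
  apply/andP; split; apply/andP; split; slia.
Qed.

Definition c3 (t0 t1 t2 x y z : nat) :=
  [&& (y < x) == (t1 < t0), (z < x) == (t2 < t0) & (z < y) == (t2 < t1)].

Definition c4 (t0 t1 t2 t3 x y z w : nat) :=
  [&& (y < x) == (t1 < t0), (z < x) == (t2 < t0), (w < x) == (t3 < t0),
      (z < y) == (t2 < t1), (w < y) == (t3 < t1) & (w < z) == (t3 < t2)].

Lemma ordc3 x y z t0 t1 t2 : ordc [:: x; y; z] [:: t0; t1; t2] = c3 t0 t1 t2 x y z.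
Proof.
apply/idP/idP.
- move=> /forallP H.
  have h01 := forallP (H (@Ordinal 3 0 isT)) (@Ordinal 3 1 isT).
  have h02 := forallP (H (@Ordinal 3 0 isT)) (@Ordinal 3 2 isT).
  have h12 := forallP (H (@Ordinal 3 1 isT)) (@Ordinal 3 2 isT).
  by rewrite /= in h01 h02 h12; rewrite /c3 h01 h02 h12.
- move=> /and3P [h1 h2 h3].
  apply/forallP => -[[|[|[|a]]] Ha] //; apply/forallP => -[[|[|[|b]]] Hb] //.
Qed.

Lemma ordc4 x y z w t0 t1 t2 t3 :
  ordc [:: x; y; z; w] [:: t0; t1; t2; t3] = c4 t0 t1 t2 t3 x y z w.
Proof.
apply/idP/idP.
- move=> /forallP H.
  have h01 := forallP (H (@Ordinal 4 0 isT)) (@Ordinal 4 1 isT).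
  have h02 := forallP (H (@Ordinal 4 0 isT)) (@Ordinal 4 2 isT).
  have h03 := forallP (H (@Ordinal 4 0 isT)) (@Ordinal 4 3 isT).
  have h12 := forallP (H (@Ordinal 4 1 isT)) (@Ordinal 4 2 isT).
  have h13 := forallP (H (@Ordinal 4 1 isT)) (@Ordinal 4 3 isT).
  have h23 := forallP (H (@Ordinal 4 2 isT)) (@Ordinal 4 3 isT).
  by rewrite /= in h01 h02 h03 h12 h13 h23; rewrite /c4 h01 h02 h03 h12 h13 h23.
- move=> /and5P [h1 h2 h3 h4 /andP [h5 h6]].
  apply/forallP => -[[|[|[|[|a]]]] Ha] //; apply/forallP => -[[|[|[|[|b]]]] Hb] //.
Qed.

Lemma contains3 n (pi : {perm 'I_n}) t0 t1 t2 :
  contains pi [:: t0; t1; t2] <->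
  exists i j k, [/\ i < j, j < k, k < n & c3 t0 t1 t2 (pf pi i) (pf pi j) (pf pi k)].
Proof.
split.
- move/containsP => [[|i [|j [|k [|l s]]]] [hsub hs hf]] //.
  exists i, j, k; have [h1 h2 h3] := (sub3 n i j k).1 hsub; split => //.
  by move: hf; rewrite /= ordc3 /c3 !ltnS.
- move=> [i [j [k [h1 h2 h3 hc]]]]; apply/containsP; exists [:: i; j; k]; split => //.
  + exact/(sub3 n i j k).2.
  + by rewrite /= ordc3 /c3 !ltnS.
Qed.

Lemma contains4 n (pi : {perm 'I_n}) t0 t1 t2 t3 :
  contains pi [:: t0; t1; t2; t3] <->
  exists i j k l, [/\ i < j, j < k, k < l, l < n &
     c4 t0 t1 t2 t3 (pf pi i) (pf pi j) (pf pi k) (pf pi l)].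
Proof.
split.
- move/containsP => [[|i [|j [|k [|l [|o s]]]]] [hsub hs hf]] //.
  exists i, j, k, l; have [h1 h2 h3 h4] := (sub4 n i j k l).1 hsub; split => //.
  by move: hf; rewrite /= ordc4 /c4 !ltnS.
- move=> [i [j [k [l [h1 h2 h3 h4 hc]]]]]; apply/containsP; exists [:: i; j; k; l]; split => //.
  + exact/(sub4 n i j k l).2.
  + by rewrite /= ordc4 /c4 !ltnS.
Qed.

Section PF.
Variables (n : nat) (pi : {perm 'I_n}).

Lemma pf_PB : PB (pf pi) n.
Proof. by move=> k kn; rewrite (pfE' pi kn) ltn_ord. Qed.

Lemma pf_PI : PI (pf pi) n.
Proof.
move=> i j hi hj; rewrite (pfE' pi hi) (pfE' pi hj) => /val_inj /perm_inj.
by move/(congr1 val).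
Qed.

Lemma pf_PS : PS (pf pi) n.
Proof.
move=> v vn; exists (val ((pi^-1)%g (Ordinal vn))); first exact: ltn_ord.
by rewrite pfE permKV.
Qed.

Lemma pf_sq k : k < n -> pf (pi * pi)%g k = pf pi (pf pi k).
Proof. by move=> kn; rewrite (pfE' _ kn) (pfE' pi kn) pfE permM. Qed.
End PF.

Definition A312 (p : nat -> nat) n :=
  forall i j k, i < j -> j < k -> k < n -> p j < p k -> p k < p i -> False.
Definition A2134 (p : nat -> nat) n :=
  forall i j k l, i < j -> j < k -> k < l -> l < n ->
    p j < p i -> p i < p k -> p k < p l -> False.

Section Trans.
Variables (n : nat) (pi : {perm 'I_n}).

Lemma av231 : avoids pi [:: 2; 3; 1] <-> A231 (pf pi) n.
Proof.
split.
- move=> hav i j k ij jk kn h1 h2; apply: (negP hav); apply/contains3.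
  exists i, j, k; split => //; rewrite /c3 /= eqbF_neg !eqb_id.
  apply/and3P; split; slia.
- move=> HA; apply/negP => /contains3 [i [j [k [h1 h2 h3 hc]]]].
  move: hc; rewrite /c3 /= eqbF_neg !eqb_id => /and3P [c1 c2 c3].
  have ne : pf pi i != pf pi j.
    by apply/eqP => /pf_PI h; have := h ltac:(lia) ltac:(lia); slia.
  apply: (HA i j k); slia.
Qed.

Lemma av312 : avoids pi [:: 3; 1; 2] <-> A312 (pf pi) n.
Proof.
split.
- move=> hav i j k ij jk kn h1 h2; apply: (negP hav); apply/contains3.
  exists i, j, k; split => //; rewrite /c3 /= eqbF_neg !eqb_id.
  apply/and3P; split; slia.
- move=> HA; apply/negP => /contains3 [i [j [k [h1 h2 h3 hc]]]].
  move: hc; rewrite /c3 /= eqbF_neg !eqb_id => /and3P [c1 c2 c3].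
  have ne : pf pi j != pf pi k.
    by apply/eqP => /pf_PI h; have := h ltac:(lia) ltac:(lia); slia.
  apply: (HA i j k); slia.
Qed.

Lemma av1243 : avoids pi [:: 1; 2; 4; 3] <-> A1243 (pf pi) n.
Proof.
split.
- move=> hav i j k l ij jk kl ln h1 h2 h3; apply: (negP hav); apply/contains4.
  exists i, j, k, l; split => //; rewrite /c4 /= !eqbF_neg !eqb_id.
  apply/and5P; split; try slia; apply/andP; split; slia.
- move=> HA; apply/negP => /contains4 [i [j [k [l [h1 h2 h3 h4 hc]]]]].
  move: hc; rewrite /c4 /= !eqbF_neg !eqb_id => /and5P [c1 c2 c3 c4 /andP [c5 c6]].
  have PI := @pf_PI n pi.
  have ne1 : pf pi i != pf pi j.
    by apply/eqP => /PI h; have := h ltac:(lia) ltac:(lia); slia.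
  have ne2 : pf pi j != pf pi l.
    by apply/eqP => /PI h; have := h ltac:(lia) ltac:(lia); slia.
  apply: (HA i j k l); slia.
Qed.

Lemma av2134 : avoids pi [:: 2; 1; 3; 4] <-> A2134 (pf pi) n.
Proof.
split.
- move=> hav i j k l ij jk kl ln h1 h2 h3; apply: (negP hav); apply/contains4.
  exists i, j, k, l; split => //; rewrite /c4 /= !eqbF_neg !eqb_id.
  apply/and5P; split; try slia; apply/andP; split; slia.
- move=> HA; apply/negP => /contains4 [i [j [k [l [h1 h2 h3 h4 hc]]]]].
  move: hc; rewrite /c4 /= !eqbF_neg !eqb_id => /and5P [c1 c2 c3 c4 /andP [c5 c6]].
  have PI := @pf_PI n pi.
  have ne1 : pf pi i != pf pi k.
    by apply/eqP => /PI h; have := h ltac:(lia) ltac:(lia); slia.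
  have ne2 : pf pi k != pf pi l.
    by apply/eqP => /PI h; have := h ltac:(lia) ltac:(lia); slia.
  apply: (HA i j k l); slia.
Qed.
End Trans.

Section RC.
Variables (n : nat) (p p' : nat -> nat).
Hypothesis Hb : PB p n.
Hypothesis Hp : forall k, k < n -> p' k = n - (p (n - k.+1)).+1.

Lemma rc_inv : forall k, k < n -> p k = n - (p' (n - k.+1)).+1.
Proof.
move=> k kn; rewrite Hp; last slia.
have -> : n - (n - k.+1).+1 = k by slia.
have := @Hb k kn; slia.
Qed.

Lemma rc1 : A231 p n -> A312 p' n.
Proof.
move=> H i j k ij jk kn; rewrite !Hp; try slia.
have := @Hb (n - i.+1) ltac:(lia); have := @Hb (n - j.+1) ltac:(lia);
have := @Hb (n - k.+1) ltac:(lia) => b1 b2 b3 h1 h2.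
apply: (H (n - k.+1) (n - j.+1) (n - i.+1)); slia.
Qed.

Lemma rc2 : A312 p n -> A231 p' n.
Proof.
move=> H i j k ij jk kn; rewrite !Hp; try slia.
have := @Hb (n - i.+1) ltac:(lia); have := @Hb (n - j.+1) ltac:(lia);
have := @Hb (n - k.+1) ltac:(lia) => b1 b2 b3 h1 h2.
apply: (H (n - k.+1) (n - j.+1) (n - i.+1)); slia.
Qed.

Lemma rc3 : A1243 p n -> A2134 p' n.
Proof.
move=> H i j k l ij jk kl ln; rewrite !Hp; try slia.
have := @Hb (n - i.+1) ltac:(lia); have := @Hb (n - j.+1) ltac:(lia);
have := @Hb (n - k.+1) ltac:(lia); have := @Hb (n - l.+1) ltac:(lia) => b1 b2 b3 b4 h1 h2 h3.
apply: (H (n - l.+1) (n - k.+1) (n - j.+1) (n - i.+1)); slia.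
Qed.

Lemma rc4 : A2134 p n -> A1243 p' n.
Proof.
move=> H i j k l ij jk kl ln; rewrite !Hp; try slia.
have := @Hb (n - i.+1) ltac:(lia); have := @Hb (n - j.+1) ltac:(lia);
have := @Hb (n - k.+1) ltac:(lia); have := @Hb (n - l.+1) ltac:(lia) => b1 b2 b3 b4 h1 h2 h3.
apply: (H (n - l.+1) (n - k.+1) (n - j.+1) (n - i.+1)); slia.
Qed.
End RC.

Section Conj.
Variable n : nat.
Definition w0 : {perm 'I_n} := perm (@rev_ord_inj n).
Definition fc (pi : {perm 'I_n}) : {perm 'I_n} := (w0 * pi * w0)%g.

Lemma w0K : (w0 * w0)%g = 1%g.
Proof. by apply/permP => x; rewrite permM !permE rev_ordK. Qed.

Lemma fcK : involutive fc.
Proof.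
by move=> pi; apply/permP => x; rewrite /fc !permM !permE !rev_ordK.
Qed.

Lemma fc_sq pi : (fc pi * fc pi)%g = fc (pi * pi)%g.
Proof.
by apply/permP => x; rewrite /fc !permM !permE !rev_ordK.
Qed.

Lemma pf_fc pi k : k < n -> pf (fc pi) k = n - (pf pi (n - k.+1)).+1.
Proof.
move=> kn; rewrite (pfE' _ kn) /fc !permM !permE /=.
have h : n - k.+1 < n by slia.
rewrite (pfE' pi h) (_ : rev_ord (Ordinal kn) = Ordinal h) //; exact: val_inj.
Qed.
End Conj.

Lemma validP n a b j : valid n a b j ->
  [/\ PB (dec a b j) n, PI (dec a b j) n, A231 (dec a b j) n, A1243 (dec a b j) n &
      A231 (fun i => dec a b j (dec a b j i)) n].
Proof.
rewrite /valid => /orP [/and3P [/eqP -> /eqP -> /eqP ->] | /and4P [h1 h2 h3 h4]].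
- have e : forall i, dec 0 0 0 i = i by move=> i; rewrite dec_id.
  split => [i|i k|i k l|i k l o|i k l]; rewrite ?e; slia.
- split; [exact: dec_PB | exact: dec_PI | exact: dec_231 | exact: dec_1243 | exact: dec_q231].
Qed.

Lemma A231_ext p p' n : (forall i, i < n -> p i = p' i) -> A231 p n -> A231 p' n.
Proof. move=> e H i j k ij jk kn; rewrite -!e; try slia; exact: H. Qed.

Lemma A1243_ext p p' n : (forall i, i < n -> p i = p' i) -> A1243 p n -> A1243 p' n.
Proof. move=> e H i j k l ij jk kl ln; rewrite -!e; try slia; exact: H. Qed.

Definition fd n (x : nat * nat * nat) (i : 'I_n) : 'I_n := insubd i (dec x.1.1 x.1.2 x.2 i).

Definition fg n x : 'I_n -> 'I_n := if injectiveb (@fd n x) then @fd n x else id.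

Lemma fg_inj n x : injective (@fg n x).
Proof. rewrite /fg; case: (injectiveP (@fd n x)) => [h|_]; [exact: h | exact: inj_id]. Qed.

Definition mk n (x : nat * nat * nat) : {perm 'I_n} := perm (@fg_inj n x).

Lemma mkE n x k : valid n x.1.1 x.1.2 x.2 -> k < n -> pf (mk n x) k = dec x.1.1 x.1.2 x.2 k.
Proof.
move=> /validP [Hb Hi _ _ _] kn.
have inj : injective (@fd n x).
  move=> u v; rewrite /fd => /(congr1 val); rewrite !val_insubd !Hb //.
  by move/Hi => h; apply: val_inj; apply: h.
rewrite (pfE' _ kn) /mk permE /fg.
have -> : injectiveb (@fd n x) by apply/injectiveP.
by rewrite /fd val_insubd /= Hb.
Qed.

Definition SA n (pi : {perm 'I_n}) :=
  [&& avoids pi [:: 2; 3; 1], avoids pi [:: 1; 2; 4; 3] & avoids (pi * pi)%g [:: 2; 3; 1]].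
Definition SB n (pi : {perm 'I_n}) :=
  [&& avoids pi [:: 3; 1; 2], avoids pi [:: 2; 1; 3; 4] & avoids (pi * pi)%g [:: 3; 1; 2]].

Lemma SAE n (pi : {perm 'I_n}) : SA pi <->
  [/\ A231 (pf pi) n, A1243 (pf pi) n & A231 (fun i => pf pi (pf pi i)) n].
Proof.
rewrite /SA; split.
- move=> /and3P [/av231 h1 /av1243 h2 /av231 h3]; split => //.
  by apply: A231_ext h3 => i; apply: pf_sq.
- move=> [h1 h2 h3]; apply/and3P; split; [exact/av231 | exact/av1243 | apply/av231].
  by apply: A231_ext h3 => i /(pf_sq pi) ->.
Qed.

Lemma SB_fc n (pi : {perm 'I_n}) : SB (fc pi) = SA pi.
Proof.
have Hp := @pf_fc n pi.
have Hq : forall k, k < n -> pf (fc (pi * pi)%g) k = n - (pf (pi * pi)%g (n - k.+1)).+1.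
  exact: pf_fc.
have Hp' := rc_inv (@pf_PB n pi) Hp.
have Hq' := rc_inv (@pf_PB n (pi * pi)%g) Hq.
rewrite /SB fc_sq; apply/idP/idP.
- move=> /and3P [/av312 h1 /av2134 h2 /av312 h3]; apply/and3P; split.
  + by apply/av231; apply: rc2 h1; [exact: pf_PB | exact: Hp'].
  + by apply/av1243; apply: rc4 h2; [exact: pf_PB | exact: Hp'].
  + by apply/av231; apply: rc2 h3; [exact: pf_PB | exact: Hq'].
- move=> /and3P [/av231 h1 /av1243 h2 /av231 h3]; apply/and3P; split.
  + by apply/av312; apply: rc1 h1; [exact: pf_PB | exact: Hp].
  + by apply/av2134; apply: rc3 h2; [exact: pf_PB | exact: Hp].
  + by apply/av312; apply: rc1 h3; [exact: pf_PB | exact: Hq].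
Qed.

Lemma card_AB n : #|[set pi : {perm 'I_n} | SA pi]| = #|[set pi : {perm 'I_n} | SB pi]|.
Proof.
have -> : [set pi : {perm 'I_n} | SB pi] = (@fc n) @: [set pi | SA pi].
  apply/setP => x; rewrite inE; apply/idP/imsetP.
  - move=> h; exists (fc x); first by rewrite inE -SB_fc fcK.
    by rewrite fcK.
  - by case=> y; rewrite inE => hy ->; rewrite SB_fc.
by rewrite card_imset //; apply: can_inj (@fcK n).
Qed.

Lemma setA_L n : [set pi : {perm 'I_n} | SA pi] = [set pi in map (mk n) (L n)].
Proof.
apply/setP => pi; rewrite !inE; apply/idP/idP.
- move/SAE => [h1 h2 h3].
  have [a [b [j [va Hf]]]] := structure (@pf_PB n pi) (@pf_PI n pi) (@pf_PS n pi) h1 h2 h3.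
  apply/mapP; exists (a, b, j); first by rewrite memL.
  apply/permP => x; apply: val_inj; rewrite -!pfE mkE //; exact: Hf.
- move=> /mapP [[[a b] j] hx ->]; rewrite memL /= in hx.
  have [Hb Hi H1 H2 H3] := validP hx.
  have e : forall i, i < n -> dec a b j i = pf (mk n (a, b, j)) i.
    by move=> i ih; rewrite mkE.
  apply/SAE; split.
  + exact: A231_ext e H1.
  + exact: A1243_ext e H2.
  + apply: A231_ext H3 => i ih; rewrite -!e //; exact: Hb.
Qed.

Lemma cardA n : #|[set pi : {perm 'I_n} | SA pi]| = Gs n.
Proof.
rewrite setA_L cardsE.
have u : uniq (map (mk n) (L n)).
  rewrite map_inj_in_uniq ?uniqL //.
  move=> [[a b] j] [[a' b'] j'] hx hy e; rewrite !memL /= in hx hy.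
  apply: (dec_inj hx hy) => i ih.
  by rewrite -(@mkE n (a, b, j) i hx ih) -(@mkE n (a', b', j') i hy ih) e.
by move/card_uniqP: u => ->; rewrite size_map size_L.
Qed.

Unset Implicit Arguments.
Import GRing.Theory.
Local Open Scope ring_scope.

Theorem theorem4p3 (n : nat) : (1 <= n)%N ->
  cn n [:: 2%N; 3%N; 1%N] [:: 1%N; 2%N; 4%N; 3%N] [:: 2%N; 3%N; 1%N]
    = cn n [:: 3%N; 1%N; 2%N] [:: 2%N; 1%N; 3%N; 4%N] [:: 3%N; 1%N; 2%N] /\
  (forall k : nat, n = (2 * k)%N ->
     (cn n [:: 2%N; 3%N; 1%N] [:: 1%N; 2%N; 4%N; 3%N] [:: 2%N; 3%N; 1%N])%:R
       = (4 * (k%:R : rat) ^+ 3 + 3 * k%:R ^+ 2 - k%:R) / 6 + 1) /\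
  (forall k : nat, n = (2 * k + 1)%N ->
     (cn n [:: 2%N; 3%N; 1%N] [:: 1%N; 2%N; 4%N; 3%N] [:: 2%N; 3%N; 1%N])%:R
       = (4 * (k%:R : rat) ^+ 3 + 9 * k%:R ^+ 2 + 5 * k%:R) / 6 + 1).
Proof.
move=> _.
have cA : cn n [:: 2%N; 3%N; 1%N] [:: 1%N; 2%N; 4%N; 3%N] [:: 2%N; 3%N; 1%N] = Gs n.
  exact: cardA.
split; first exact: card_AB.
rewrite cA; split => k ->.
- have [h _] := Gs_closed k.
  have := congr1 (fun m => m%:R : rat) h; move=> e.
  lra.
- have [_ h] := Gs_closed k.
  have := congr1 (fun m => m%:R : rat) h; move=> e.
  rewrite addn1; lra.
Qed.
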